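(* Let $\mathbb{T}^2=[-\pi,\pi]^2$, let $k_0$ be a positive integer, $U(y)=\sin(k_0y)$, let $f_0,g_0$ be smooth $2\pi$-periodic functions, and let $\rho$ solve \[ \partial_t\rho+U(y)\partial_x\rho=0,\qquad \rho(0,x,y)=f_0(y)\sin x+g_0(y)\cos x . \] Then $\|\rho(t,\cdot)\|_{H^1}^2\le 2\|\rho(0,\cdot)\|_{H^1}^2+10\pi k_0^2t^2\|\rho(0,\cdot)\|_{L^2}^2$.
   Context: $\|F\|_{H^1}^2=\int_{\mathbb{T}^2}\big(F^2+|\nabla F|^2\big)\,dx\,dy$. *)

(* Defs.v *)
From Stdlib Require Import Reals.
From Coquelicot Require Import Coquelicot.
Open Scope R_scope.

Definition smooth (f : R -> R) : Prop :=
  forall (n : nat) (x : R), ex_derive (Derive_n f n) x.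

Definition periodic_2pi (f : R -> R) : Prop :=
  forall y, f (y + 2 * PI) = f y.

Definition int_T2 (F : R -> R -> R) : R :=
  RInt (fun x => RInt (fun y => F x y) (- PI) PI) (- PI) PI.

Definition dx (F : R -> R -> R) (x y : R) : R := Derive (fun x' => F x' y) x.
Definition dy (F : R -> R -> R) (x y : R) : R := Derive (fun y' => F x y') y.

Definition L2sq (F : R -> R -> R) : R := int_T2 (fun x y => (F x y) ^ 2).
Definition H1sq (F : R -> R -> R) : R :=
  int_T2 (fun x y => (F x y) ^ 2 + ((dx F x y) ^ 2 + (dy F x y) ^ 2)).

Definition dt3 (rho : R -> R -> R -> R) (t x y : R) : R :=
  Derive (fun t' => rho t' x y) t.
Definition dx3 (rho : R -> R -> R -> R) (t x y : R) : R :=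
  Derive (fun x' => rho t x' y) x.
Definition dy3 (rho : R -> R -> R -> R) (t x y : R) : R :=
  Derive (fun y' => rho t x y') y.

Definition uncurry3 (h : R -> R -> R -> R) : R * R * R -> R :=
  fun p => h (fst (fst p)) (snd (fst p)) (snd p).

Definition C1_3 (rho : R -> R -> R -> R) : Prop :=
  (forall t x y, ex_derive (fun t' => rho t' x y) t /\
                 ex_derive (fun x' => rho t x' y) x /\
                 ex_derive (fun y' => rho t x y') y) /\
  (forall p : R * R * R,
     continuous (uncurry3 rho) p /\
     continuous (uncurry3 (dt3 rho)) p /\
     continuous (uncurry3 (dx3 rho)) p /\
     continuous (uncurry3 (dy3 rho)) p).

(* Main.v *)
From Stdlib Require Import Reals Lra Psatz FunctionalExtensionality.
From Coquelicot Require Import Coquelicot.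
Require Import Defs.
Open Scope R_scope.
From Stdlib Require Import Reals Lra Psatz FunctionalExtensionality.

Lemma pair_cont (p : R * R) (y : R) :
  filterlim (fun z : R * R => (z, y)) (locally p) (locally (p, y)).
Proof.
  intros P [e He]. exists e. intros z Hz. apply He. split; [exact Hz| apply ball_center].
Qed.

Lemma cont2d (g : R -> R -> R -> R) (y u0 v0 : R) :
  continuous (uncurry3 g) ((u0, v0), y) ->
  continuity_2d_pt (fun u v => g u v y) u0 v0.
Proof.
  intros H. apply continuity_2d_pt_filterlim.
  apply (filterlim_comp _ _ _ (fun z : R * R => (z, y)) (uncurry3 g) _ (locally ((u0,v0),y))).
  - apply pair_cont.
  - exact H.
Qed.
Lemma chain2 (G : R -> R -> R) (a U s : R) :
  (forall r z, ex_derive (fun r' => G r' z) r) ->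
  (forall r z, ex_derive (fun z' => G r z') z) ->
  continuity_2d_pt (fun u v => Derive (fun r' => G r' v) u) s (a + U*s) ->
  is_derive (fun r => G r (a + U*r)) s
    (Derive (fun r' => G r' (a+U*s)) s + U * Derive (fun z' => G s z') (a+U*s)).
Proof.
  intros Ht Hx Hc.
  apply is_derive_Reals. intros eps Heps.
  set (Gt0 := Derive (fun r' => G r' (a+U*s)) s).
  set (Gx := Derive (fun z' => G s z') (a+U*s)).
  assert (H2 : derivable_pt_lim (fun r => G s (a + U*r)) s (U * Gx)).
  { apply is_derive_Reals.
    apply (is_derive_comp (fun z' => G s z') (fun r => a + U*r) s Gx U).
    - apply Derive_correct, Hx.
    - auto_derive; auto; ring. }
  assert (He2 : 0 < eps/2) by lra.
  destruct (H2 (eps/2) He2) as [d2 Hd2].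
  destruct (Hc (mkposreal (eps/2) He2)) as [d1 Hd1]. simpl in Hd1.
  assert (HU : 0 < Rabs U + 1) by (pose proof (Rabs_pos U); lra).
  assert (Hd1' : 0 < d1 / (Rabs U + 1)) by (apply Rdiv_lt_0_compat; [apply cond_pos|lra]).
  exists (mkposreal _ (Rmin_pos _ _ (cond_pos d2) Hd1')).
  intros h hne hlt. simpl in hlt.
  assert (hd2 : Rabs h < d2) by (eapply Rlt_le_trans; [exact hlt| apply Rmin_l]).
  assert (hd1 : Rabs h < d1 / (Rabs U + 1)) by (eapply Rlt_le_trans; [exact hlt| apply Rmin_r]).
  assert (hd1b : (Rabs U + 1) * Rabs h < d1).
  { apply (Rmult_lt_compat_l (Rabs U + 1)) in hd1; [|lra].
    replace ((Rabs U + 1) * (d1 / (Rabs U + 1))) with (pos d1) in hd1 by (field; lra). exact hd1. }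
  pose proof (Rabs_pos h). pose proof (Rabs_pos U).
  destruct (MVT_gen (fun r => G r (a + U*(s+h))) s (s+h)
             (fun r => Derive (fun r' => G r' (a + U*(s+h))) r)) as [c [Hc1 Hc2]].
  { intros; apply Derive_correct, Ht. }
  { intros x _; apply continuity_pt_filterlim; exact (ex_derive_continuous (fun r => G r (a + U*(s+h))) x (Ht _ _)). }
  specialize (Hd2 h hne hd2).
  assert (Hcs : Rabs (c - s) < d1).
  { assert (Rabs (c - s) <= Rabs h).
    { revert Hc1. unfold Rmin, Rmax. destruct (Rle_dec s (s+h)); intros;
      unfold Rabs; repeat destruct Rcase_abs; lra. }
    nra. }
  assert (Hxs : Rabs (a + U*(s+h) - (a + U*s)) < d1).
  { replace (a + U*(s+h) - (a + U*s)) with (U*h) by ring. rewrite Rabs_mult. nra. }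
  specialize (Hd1 c (a + U*(s+h)) Hcs Hxs).
  replace ((G (s + h) (a + U * (s + h)) - G s (a + U * s)) / h - (Gt0 + U * Gx))
    with ((Derive (fun r' : R => G r' (a + U * (s + h))) c - Gt0)
          + ((G s (a + U * (s + h)) - G s (a + U * s)) / h - U * Gx)).
  2:{ replace (G (s + h) (a + U * (s + h))) with
        (G s (a + U * (s + h)) + (G (s + h) (a + U * (s + h)) - G s (a + U * (s + h)))) by ring.
      rewrite Hc2. field. exact hne. }
  eapply Rle_lt_trans; [apply Rabs_triang|]. fold Gt0 in Hd1. lra.
Qed.

Lemma charac (k0 : nat) (f0 g0 : R -> R) (rho : R -> R -> R -> R) :
  C1_3 rho ->
  (forall t x y, 0 <= t ->
     dt3 rho t x y + sin (INR k0 * y) * dx3 rho t x y = 0) ->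
  (forall x y, rho 0 x y = f0 y * sin x + g0 y * cos x) ->
  forall t x y, 0 <= t ->
  rho t x y = f0 y * sin (x - t * sin (INR k0 * y)) + g0 y * cos (x - t * sin (INR k0 * y)).
Proof.
  intros [Hd Hc] Hpde Hinit t x y Ht.
  set (U := sin (INR k0 * y)).
  set (a0 := x - t * U).
  rewrite <- Hinit.
  set (h := fun r => (fun a b => rho a b y) r (a0 + U * r)).
  change (rho t x y) with (rho t x y).
  replace (rho t x y) with (h t) by (unfold h, a0; f_equal; ring).
  replace (rho 0 (x - t * U) y) with (h 0) by (unfold h, a0; f_equal; ring).
  destruct (Req_dec t 0) as [->|Hne]; [unfold h, a0; f_equal; ring|].
  symmetry. transitivity (h 0); [unfold h, a0; f_equal; ring|]. apply (eq_is_derive h 0 t); [|lra].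
  intros r [Hr0 Hrt].
  unfold h.
  assert (E := chain2 (fun a b => rho a b y) a0 U r
     (fun r z => proj1 (Hd r z y)) (fun r z => proj1 (proj2 (Hd r z y)))
     (cont2d (dt3 rho) y r (a0 + U*r) (proj1 (proj2 (Hc ((r, a0 + U*r), y)))))).
  simpl in E.
  assert (Z : Derive (fun r' => rho r' (a0 + U * r) y) r + U * Derive (fun z' => rho r z' y) (a0 + U * r) = 0)
    by (apply (Hpde r (a0 + U*r) y Hr0)).
  rewrite Z in E. exact E.
Qed.
Lemma is_RInt_lin3 (P Q S : R -> R) (a b p q s u v w : R) :
  is_RInt P a b p -> is_RInt Q a b q -> is_RInt S a b s ->
  is_RInt (fun y => P y * u + Q y * v + S y * w) a b (p*u + q*v + s*w).
Proof.
  intros HP HQ HS.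
  assert (H := is_RInt_plus _ _ _ _ _ _ (is_RInt_plus _ _ _ _ _ _ (is_RInt_scal _ _ _ u _ HP) (is_RInt_scal _ _ _ v _ HQ)) (is_RInt_scal _ _ _ w _ HS)).
  replace (p*u + q*v + s*w) with (plus (plus (scal u p) (scal v q)) (scal w s)).
  - eapply is_RInt_ext; [|exact H]. intros x _. simpl.
    unfold plus, scal; simpl; unfold mult; simpl. ring.
  - unfold plus, scal; simpl; unfold mult; simpl. ring.
Qed.

Lemma int_s2 : is_RInt (fun x => sin x ^ 2) (-PI) PI PI.
Proof.
  assert (H := is_RInt_derive (fun x => (x - sin x * cos x)/2) (fun x => sin x ^ 2) (-PI) PI).
  replace PI with (minus ((fun x => (x - sin x * cos x)/2) PI) ((fun x => (x - sin x * cos x)/2) (-PI))) at 3.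
  apply H.
  - intros x _. auto_derive; auto. pose proof (sin2_cos2 x). unfold Rsqr in *. nra.
  - intros x _. apply (ex_derive_continuous (fun x => sin x ^ 2)). auto_derive; auto.
  - simpl. unfold minus, plus, opp; simpl. rewrite sin_PI, sin_neg, sin_PI. field.
Qed.

Lemma int_c2 : is_RInt (fun x => cos x ^ 2) (-PI) PI PI.
Proof.
  assert (H := is_RInt_derive (fun x => (x + sin x * cos x)/2) (fun x => cos x ^ 2) (-PI) PI).
  replace PI with (minus ((fun x => (x + sin x * cos x)/2) PI) ((fun x => (x + sin x * cos x)/2) (-PI))) at 3.
  apply H.
  - intros x _. auto_derive; auto. pose proof (sin2_cos2 x). unfold Rsqr in *. nra.
  - intros x _. apply (ex_derive_continuous (fun x => cos x ^ 2)). auto_derive; auto.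
  - simpl. unfold minus, plus, opp; simpl. rewrite sin_PI, sin_neg, sin_PI. field.
Qed.

Lemma int_sc : is_RInt (fun x => sin x * cos x) (-PI) PI 0.
Proof.
  assert (H := is_RInt_derive (fun x => (sin x ^ 2)/2) (fun x => sin x * cos x) (-PI) PI).
  replace 0 with (minus ((fun x => (sin x ^ 2)/2) PI) ((fun x => (sin x ^ 2)/2) (-PI))).
  apply H.
  - intros x _. auto_derive; auto. field.
  - intros x _. apply (ex_derive_continuous (fun x => sin x * cos x)). auto_derive; auto.
  - simpl. unfold minus, plus, opp; simpl. rewrite sin_neg, sin_PI. field.
Qed.

Lemma int_quad (P Q S : R -> R) :
  ex_RInt P (-PI) PI -> ex_RInt Q (-PI) PI -> ex_RInt S (-PI) PI ->
  int_T2 (fun x y => P y * sin x ^ 2 + Q y * (sin x * cos x) + S y * cos x ^ 2)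
  = PI * RInt (fun y => P y + S y) (-PI) PI.
Proof.
  intros HP HQ HS. unfold int_T2.
  rewrite (RInt_ext _ (fun x => RInt P (-PI) PI * sin x ^ 2 + RInt Q (-PI) PI * (sin x * cos x) + RInt S (-PI) PI * cos x ^ 2)).
  2:{ intros x _. apply is_RInt_unique. apply is_RInt_lin3; [exact (RInt_correct P _ _ HP)|exact (RInt_correct Q _ _ HQ)|exact (RInt_correct S _ _ HS)]. }
  rewrite (RInt_ext _ (fun x => sin x ^ 2 * RInt P (-PI) PI + (sin x * cos x) * RInt Q (-PI) PI + cos x ^ 2 * RInt S (-PI) PI)).
  2:{ intros x _. change (@eq R (RInt P (-PI) PI * sin x ^ 2 + RInt Q (-PI) PI * (sin x * cos x) + RInt S (-PI) PI * cos x ^ 2) (sin x ^ 2 * RInt P (- PI) PI + sin x * cos x * RInt Q (- PI) PI + cos x ^ 2 * RInt S (- PI) PI)). ring. }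
  rewrite (is_RInt_unique _ _ _ _ (is_RInt_lin3 _ _ _ _ _ _ _ _ _ _ _ int_s2 int_sc int_c2)).
  rewrite (RInt_plus P S); auto. unfold plus; simpl. ring.
Qed.

Lemma exRI (h : R -> R) : (forall y, ex_derive h y) -> ex_RInt h (-PI) PI.
Proof.
  intros H. apply (@ex_RInt_continuous R_CompleteNormedModule). intros z _. apply (ex_derive_continuous h), H.
Qed.

Definition Ft (k0 : nat) (f0 g0 : R -> R) (t : R) : R -> R -> R :=
  fun x y => f0 y * sin (x - t * sin (INR k0 * y)) + g0 y * cos (x - t * sin (INR k0 * y)).

Lemma sm0 f : smooth f -> forall y, ex_derive f y.
Proof. intros H y. exact (H 0%nat y). Qed.
Lemma sm1 f : smooth f -> forall y, ex_derive (Derive f) y.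
Proof. intros H y. exact (H 1%nat y). Qed.

Lemma dx_Ft k0 f0 g0 t x y :
  dx (Ft k0 f0 g0 t) x y =
  - g0 y * sin (x - t * sin (INR k0 * y)) + f0 y * cos (x - t * sin (INR k0 * y)).
Proof.
  unfold dx, Ft. apply is_derive_unique. auto_derive; auto. unfold Rminus; ring.
Qed.

Lemma dy_Ft k0 f0 g0 t x y : smooth f0 -> smooth g0 ->
  dy (Ft k0 f0 g0 t) x y =
  (Derive f0 y + g0 y * (t * (INR k0 * cos (INR k0 * y)))) * sin (x - t * sin (INR k0 * y))
  + (Derive g0 y - f0 y * (t * (INR k0 * cos (INR k0 * y)))) * cos (x - t * sin (INR k0 * y)).
Proof.
  intros H1 H2.
  unfold dy, Ft. apply is_derive_unique. auto_derive.
  - repeat split; auto using sm0.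
  - unfold Rminus; change (Derive (fun x0 => f0 x0)) with (Derive f0); change (Derive (fun x0 => g0 x0)) with (Derive g0); ring.
Qed.

Definition pp (al be s : R) := al * cos s + be * sin s.
Definition qq (al be s : R) := be * cos s - al * sin s.

Lemma sq_id al be s x :
  (al * sin (x - s) + be * cos (x - s)) ^ 2 =
  pp al be s ^ 2 * sin x ^ 2 + (2 * pp al be s * qq al be s) * (sin x * cos x) + qq al be s ^ 2 * cos x ^ 2.
Proof. unfold pp, qq. rewrite sin_minus, cos_minus. ring. Qed.

Lemma pq_id al be s : pp al be s ^ 2 + qq al be s ^ 2 = al ^ 2 + be ^ 2.
Proof.
  unfold pp, qq. pose proof (sin2_cos2 s). unfold Rsqr in H.
  replace (al ^ 2 + be ^ 2) with ((al ^ 2 + be ^ 2) * (sin s * sin s + cos s * cos s)) by (rewrite H; ring).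
  ring.
Qed.

Lemma H1_Ft k0 f0 g0 t : smooth f0 -> smooth g0 ->
  H1sq (Ft k0 f0 g0 t) = PI * RInt (fun y =>
    (f0 y ^ 2 + g0 y ^ 2) + ((g0 y ^ 2 + f0 y ^ 2) +
    ((Derive f0 y + g0 y * (t * (INR k0 * cos (INR k0 * y)))) ^ 2
     + (Derive g0 y - f0 y * (t * (INR k0 * cos (INR k0 * y)))) ^ 2))) (-PI) PI.
Proof.
  intros H1 H2. unfold H1sq.
  set (s := fun y => t * sin (INR k0 * y)).
  set (a3 := fun y => Derive f0 y + g0 y * (t * (INR k0 * cos (INR k0 * y)))).
  set (b3 := fun y => Derive g0 y - f0 y * (t * (INR k0 * cos (INR k0 * y)))).
  set (P := fun y => pp (f0 y) (g0 y) (s y) ^ 2 + (pp (- g0 y) (f0 y) (s y) ^ 2 + pp (a3 y) (b3 y) (s y) ^ 2)).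
  set (Q := fun y => 2 * pp (f0 y) (g0 y) (s y) * qq (f0 y) (g0 y) (s y)
      + (2 * pp (- g0 y) (f0 y) (s y) * qq (- g0 y) (f0 y) (s y)
      + 2 * pp (a3 y) (b3 y) (s y) * qq (a3 y) (b3 y) (s y))).
  set (S := fun y => qq (f0 y) (g0 y) (s y) ^ 2 + (qq (- g0 y) (f0 y) (s y) ^ 2 + qq (a3 y) (b3 y) (s y) ^ 2)).
  replace (fun x y => Ft k0 f0 g0 t x y ^ 2 + (dx (Ft k0 f0 g0 t) x y ^ 2 + dy (Ft k0 f0 g0 t) x y ^ 2))
    with (fun x y => P y * sin x ^ 2 + Q y * (sin x * cos x) + S y * cos x ^ 2).
  2:{ apply functional_extensionality; intro x; apply functional_extensionality; intro y.
      rewrite dx_Ft, dy_Ft by assumption. unfold Ft.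
      fold (s y). fold (a3 y). fold (b3 y).
      rewrite !sq_id. unfold P, Q, S. ring. }
  rewrite int_quad.
  - f_equal. apply RInt_ext. intros y _. unfold P, S.
    pose proof (pq_id (f0 y) (g0 y) (s y)). pose proof (pq_id (- g0 y) (f0 y) (s y)).
    pose proof (pq_id (a3 y) (b3 y) (s y)). unfold a3, b3 in *. nra.
  - apply exRI. intro y. unfold P, pp, s, a3, b3. auto_derive; repeat split; auto using sm0, sm1.
  - apply exRI. intro y. unfold Q, pp, qq, s, a3, b3. auto_derive; repeat split; auto using sm0, sm1.
  - apply exRI. intro y. unfold S, qq, s, a3, b3. auto_derive; repeat split; auto using sm0, sm1.
Qed.

Lemma L2_Ft k0 f0 g0 t : smooth f0 -> smooth g0 ->
  L2sq (Ft k0 f0 g0 t) = PI * RInt (fun y => f0 y ^ 2 + g0 y ^ 2) (-PI) PI.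
Proof.
  intros H1 H2. unfold L2sq.
  set (s := fun y => t * sin (INR k0 * y)).
  replace (fun x y => Ft k0 f0 g0 t x y ^ 2)
    with (fun x y => pp (f0 y) (g0 y) (s y) ^ 2 * sin x ^ 2
           + (2 * pp (f0 y) (g0 y) (s y) * qq (f0 y) (g0 y) (s y)) * (sin x * cos x)
           + qq (f0 y) (g0 y) (s y) ^ 2 * cos x ^ 2).
  2:{ apply functional_extensionality; intro x; apply functional_extensionality; intro y.
      unfold Ft. fold (s y). rewrite sq_id. reflexivity. }
  rewrite (int_quad (fun y => pp (f0 y) (g0 y) (s y) ^ 2)
                    (fun y => 2 * pp (f0 y) (g0 y) (s y) * qq (f0 y) (g0 y) (s y))
                    (fun y => qq (f0 y) (g0 y) (s y) ^ 2)).
  - f_equal. apply RInt_ext. intros y _. apply pq_id.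
  - apply exRI. intro y. unfold pp, s. auto_derive; repeat split; auto using sm0, sm1.
  - apply exRI. intro y. unfold pp, qq, s. auto_derive; repeat split; auto using sm0, sm1.
  - apply exRI. intro y. unfold qq, s. auto_derive; repeat split; auto using sm0, sm1.
Qed.

Lemma RInt_lin2 (B C : R -> R) (u v : R) :
  ex_RInt B (-PI) PI -> ex_RInt C (-PI) PI ->
  RInt (fun y => B y * u + C y * v) (-PI) PI
  = RInt B (-PI) PI * u + RInt C (-PI) PI * v.
Proof.
  intros HB HC. apply is_RInt_unique.
  assert (H := is_RInt_plus _ _ _ _ _ _ (is_RInt_scal _ _ _ u _ (RInt_correct B _ _ HB)) (is_RInt_scal _ _ _ v _ (RInt_correct C _ _ HC))).
  replace (RInt B (-PI) PI * u + RInt C (-PI) PI * v) with (plus (scal u (RInt B (-PI) PI)) (scal v (RInt C (-PI) PI))).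
  - eapply is_RInt_ext; [|exact H]. intros x _. simpl.
    unfold plus, scal; simpl; unfold mult; simpl. ring.
  - unfold plus, scal; simpl; unfold mult; simpl. ring.
Qed.

Lemma pw_ineq (a b c d sp K : R) :
  sp ^ 2 <= K -> 2 < PI ->
  (c ^ 2 + d ^ 2) + ((d ^ 2 + c ^ 2) + ((a + d * sp) ^ 2 + (b - c * sp) ^ 2))
  <= ((c ^ 2 + d ^ 2) + ((d ^ 2 + c ^ 2) + ((a + d * 0) ^ 2 + (b - c * 0) ^ 2))) * 2
     + (c ^ 2 + d ^ 2) * (10 * PI * K).
Proof.
  intros HK HPI.
  assert (0 <= c^2 + d^2) by (apply Rplus_le_le_0_compat; apply pow2_ge_0).
  assert (0 <= (a - sp*d)^2 + (b + sp*c)^2) by (apply Rplus_le_le_0_compat; apply pow2_ge_0).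
  assert (2 * sp^2 <= 10 * PI * K) by nra.
  assert ((c^2+d^2) * (2 * sp^2) <= (c^2+d^2) * (10 * PI * K)) by (apply Rmult_le_compat_l; auto).
  nra.
Qed.

Theorem lemma3p4 (k0 : nat) (f0 g0 : R -> R) (rho : R -> R -> R -> R) :
  (0 < k0)%nat ->
  smooth f0 -> smooth g0 -> periodic_2pi f0 -> periodic_2pi g0 ->
  C1_3 rho ->
  (forall t x y, 0 <= t ->
     dt3 rho t x y + sin (INR k0 * y) * dx3 rho t x y = 0) ->
  (forall x y, rho 0 x y = f0 y * sin x + g0 y * cos x) ->
  forall t, 0 <= t ->
    H1sq (rho t) <= 2 * H1sq (rho 0)
                    + 10 * PI * (INR k0) ^ 2 * t ^ 2 * L2sq (rho 0).
Proof.
  intros Hk Hf Hg _ _ HC Hpde Hinit t Ht.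
  assert (Hr : forall s, 0 <= s -> rho s = Ft k0 f0 g0 s).
  { intros s Hs. apply functional_extensionality; intro x; apply functional_extensionality; intro y.
    unfold Ft. apply (charac k0 f0 g0 rho HC Hpde Hinit s x y Hs). }
  rewrite (Hr t Ht), (Hr 0 (Rle_refl 0)).
  rewrite H1_Ft, H1_Ft, L2_Ft by auto.
  match goal with |- PI * RInt ?A _ _ <= 2 * (PI * RInt ?B _ _) + ?c * (PI * RInt ?C _ _) =>
    replace (2 * (PI * RInt B (-PI) PI) + c * (PI * RInt C (-PI) PI))
      with (PI * (RInt B (-PI) PI * 2 + RInt C (-PI) PI * c)) by ring;
    rewrite <- (RInt_lin2 B C 2 c) end.
  2:{ apply exRI. intro y. auto_derive; repeat split; auto using sm0, sm1. }
  2:{ apply exRI. intro y. auto_derive; repeat split; auto using sm0, sm1. }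
  apply Rmult_le_compat_l; [pose proof PI_RGT_0; lra|].
  apply RInt_le.
  - pose proof PI_RGT_0; lra.
  - apply exRI. intro y. auto_derive; repeat split; auto using sm0, sm1.
  - apply exRI. intro y. auto_derive; repeat split; auto using sm0, sm1.
  - intros y _. cbv beta.
    replace (0 * (INR k0 * cos (INR k0 * y))) with 0 by ring.
    replace (10 * PI * INR k0 ^ 2 * t ^ 2) with (10 * PI * (INR k0 ^ 2 * t ^ 2)) by ring.
    apply pw_ineq.
    + pose proof (sin2_cos2 (INR k0 * y)). unfold Rsqr in *.
      assert (cos (INR k0 * y) ^ 2 <= 1) by nra.
      assert (0 <= INR k0 ^ 2 * t ^ 2) by (apply Rmult_le_pos; apply pow2_ge_0).
      replace ((t * (INR k0 * cos (INR k0 * y))) ^ 2) with ((INR k0 ^ 2 * t ^ 2) * cos (INR k0 * y) ^ 2) by ring.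
      nra.
    + pose proof PI2_1; lra.
Qed.
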